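(* Let $R$ be an abelian $\star$-ring such that for every $r\in Reg(R)$ and every $y\in R$, whenever $ry$ is idempotent it is a projection and whenever $yr$ is idempotent it is a projection. Then $R$ is $\star$-$r$-clean if and only if $R$ is $\star$-clean.
   Context: Rings are associative with identity; $R$ is abelian if all its idempotents are central. A $\star$-ring is a ring $R$ with a map $\star:R\to R$ satisfying $(x+y)^\star=x^\star+y^\star$, $(xy)^\star=y^\star x^\star$, $(x^\star)^\star=x$. A projection is $p\in R$ with $p^2=p=p^\star$; $P(R)$ denotes the set of projections. $U(R)$ denotes the units and $Reg(R)=\{r\in R: r=ryr \text{ for some } y\in R\}$ the regular elements. $R$ is $\star$-clean if every $x\in R$ can be written $x=u+p$ with $u\in U(R)$, $p\in P(R)$. $R$ is $\star$-$r$-clean if every $x\in R$ can be written $x=r+p$ with $r\in Reg(R)$, $p\in P(R)$. *)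

(* Defs.v *)
From mathcomp Require Import all_boot all_algebra.
Set Implicit Arguments. Unset Strict Implicit. Unset Printing Implicit Defensive.
Import GRing.Theory.
Local Open Scope ring_scope.

Definition is_involution (R : pzRingType) (star : R -> R) : Prop :=
  [/\ forall x y : R, star (x + y) = star x + star y,
      forall x y : R, star (x * y) = star y * star x &
      forall x : R, star (star x) = x].

Definition idem_elt (R : pzRingType) (e : R) : Prop := e * e = e.

Definition abelian_ring (R : pzRingType) : Prop :=
  forall e : R, idem_elt e -> forall x : R, e * x = x * e.

Definition projection (R : pzRingType) (star : R -> R) (p : R) : Prop :=
  p * p = p /\ p = star p.

Definition is_unit_elt (R : pzRingType) (u : R) : Prop :=
  exists v : R, u * v = 1 /\ v * u = 1.

Definition is_regular_elt (R : pzRingType) (r : R) : Prop :=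
  exists y : R, r = r * y * r.

Definition star_clean (R : pzRingType) (star : R -> R) : Prop :=
  forall x : R, exists u p : R, is_unit_elt u /\ projection star p /\ x = u + p.

Definition star_r_clean (R : pzRingType) (star : R -> R) : Prop :=
  forall x : R, exists r p : R, is_regular_elt r /\ projection star p /\ x = r + p.

(* Main.v *)
Require Import Defs.
From mathcomp Require Import all_boot all_algebra.
Local Open Scope ring_scope.
Import GRing.Theory.
Set Implicit Arguments. Unset Strict Implicit. Unset Printing Implicit Defensive.

Definition centr (R : pzRingType) (c : R) := forall x : R, c * x = x * c.

Lemma centr1 (R : pzRingType) : centr (1 : R).
Proof. by move=> x; rewrite mul1r mulr1. Qed.

Lemma centrB (R : pzRingType) (a b : R) : centr a -> centr b -> centr (a - b).
Proof. by move=> ha hb x; rewrite mulrBl mulrBr ha hb. Qed.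

Lemma centrM (R : pzRingType) (a b : R) : centr a -> centr b -> centr (a * b).
Proof. by move=> ha hb x; rewrite -mulrA hb mulrA ha mulrA. Qed.

Lemma star0 (R : pzRingType) (star : R -> R) : is_involution star -> star 0 = 0.
Proof.
case=> hD _ _; have h := hD 0 0; rewrite addr0 in h.
by apply: (addrI (star 0)); rewrite addr0 -h.
Qed.

Lemma starN (R : pzRingType) (star : R -> R) (a : R) :
  is_involution star -> star (- a) = - star a.
Proof.
move=> hi; have h0 := star0 hi; case: hi => hD _ _.
by apply: (addrI (star a)); rewrite -hD !subrr.
Qed.

Lemma star1 (R : pzRingType) (star : R -> R) : is_involution star -> star 1 = 1.
Proof.
case=> _ hM hK.
by rewrite -[star 1]mulr1 -{2}(hK 1) -hM mulr1 hK.
Qed.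

Lemma unit_reg (R : pzRingType) (u : R) : is_unit_elt u -> is_regular_elt u.
Proof. by case=> v [h1 h2]; exists v; rewrite h1 mul1r. Qed.

Lemma idemB (R : pzRingType) (p : R) : p * p = p -> (1 - p) * (1 - p) = 1 - p.
Proof. by move=> h; rewrite mulrBl mul1r mulrBr mulr1 h subrr subr0. Qed.

Lemma orth (R : pzRingType) (p : R) : p * p = p -> p * (1 - p) = 0.
Proof. by move=> h; rewrite mulrBr mulr1 h subrr. Qed.

Lemma orth' (R : pzRingType) (p : R) : p * p = p -> (1 - p) * p = 0.
Proof. by move=> h; rewrite mulrBl mul1r h subrr. Qed.

Lemma idemM (R : pzRingType) (a b : R) :
  centr b -> a * a = a -> b * b = b -> a * b * (a * b) = a * b.
Proof.
by move=> cb ha hb; rewrite -mulrA (mulrA b a b) (cb a) -mulrA hb mulrA ha.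
Qed.

Lemma zeroM (R : pzRingType) (a b c d : R) :
  centr b -> a * c = 0 -> a * b * (c * d) = 0.
Proof.
by move=> cb h; rewrite -mulrA (mulrA b c d) (cb c) -mulrA mulrA h mul0r.
Qed.

Theorem theorem4p17 (R : pzRingType) (star : R -> R) :
  is_involution star ->
  abelian_ring R ->
  (forall r y : R, is_regular_elt r ->
     (idem_elt (r * y) -> projection star (r * y)) /\
     (idem_elt (y * r) -> projection star (y * r))) ->
  (star_r_clean star <-> star_clean star).
Proof.
move=> hi hab hreg; split; last first.
  by move=> hc x; have [u [p [hu [hp ->]]]] := hc x; exists u, p; split=> //; apply: unit_reg.
move=> hc x; have [r [p [hr [[hpp hps] ->]]]] := hc x.
have hr' := hr; case: hr' => y hy.
have hryr : r * y * r = r by rewrite -hy.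
pose e := r * y.
have he : idem_elt e by rewrite /idem_elt /e mulrA hryr.
have [hee' hes] := (hreg r y hr).1 he.
have hee : e * e = e := he.
have ce : centr e by move=> z; apply: hab.
have cp : centr p by move=> z; apply: hab.
pose g := y * r.
have hg : idem_elt g by rewrite /idem_elt /g mulrA -(mulrA y) -(mulrA y) hryr.
have cg : centr g by move=> z; apply: hab.
have heg : e = g * e.
  rewrite /e -[in LHS]hryr -(mulrA r y r) -/g -cg mulrA; done.
have hge : g = e * g.
  rewrite /g -[in LHS]hryr (mulrA y (r * y) r) -/e -ce -mulrA; done.
have hEG : e = g by rewrite heg cg -hge.
pose z := y * e.
pose f := 1 - e.
have cf : centr f by apply: centrB => //; apply: centr1.
have hre : r * e = r by rewrite -ce /e hryr.
have hrf : r * f = 0 by rewrite /f mulrBr mulr1 hre subrr.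
have hze : z * e = z by rewrite /z -mulrA hee.
have hzf : z * f = 0 by rewrite /f mulrBr mulr1 hze subrr.
have hrz : r * z = e by rewrite /z mulrA -/e hee.
have hzr : z * r = e by rewrite /z -mulrA ce mulrA -/g -hEG hee.
pose s := p - (1 - p).
have cs : centr s by apply: centrB => //; apply: centrB => //; apply: centr1.
have hss : s * s = 1.
  rewrite /s mulrBl (mulrBr p p (1 - p)) (mulrBr (1 - p) p (1 - p)) hpp orth // orth' // idemB //.
  by rewrite subr0 sub0r opprK addrC subrK.
pose w := s * f.
have cw : centr w by apply: centrM.
have hff : f * f = f by apply: idemB.
have hww : w * w = f by rewrite /w mulrA -(mulrA s f s) (cf s) mulrA hss mul1r hff.
have hrw : r * w = 0 by rewrite /w mulrA -(cs r) -mulrA hrf mulr0.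
have hzw : z * w = 0 by rewrite /w mulrA -(cs z) -mulrA hzf mulr0.
exists (r + w), (p * e + (1 - p) * f); split; last split.
- exists (z + w); split; rewrite !mulrDl !mulrDr ?hrz ?hzr ?hrw ?hzw ?(cw z) ?(cw r) ?hrw ?hzw hww.
  + by rewrite /f !addr0 !add0r addrC subrK.
  + by rewrite /f !addr0 !add0r addrC subrK.
- split.
  + rewrite (mulrDl (p * e) ((1 - p) * f)) (mulrDr (p * e)) (mulrDr ((1 - p) * f)).
    rewrite idemM // zeroM ?orth // zeroM ?orth' // idemM ?idemB //.
    by rewrite addr0 add0r.
  + case: hi => hD hM hK.
    have hi' : is_involution star by [].
    have se : star e = e by rewrite -hes.
    have sp : star p = p by rewrite -hps.
    have sf : star f = f by rewrite /f hD starN // star1 // se.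
    have s1p : star (1 - p) = 1 - p by rewrite hD starN // star1 // sp.
    by rewrite hD (hM p e) (hM (1 - p) f) se sp sf s1p (ce p) (cf (1 - p)).
- rewrite -addrA; congr (_ + _).
  rewrite /w /s mulrBl (addrC (p * e)) addrA subrK -mulrDr /f subrK mulr1 //.
Qed.
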